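(* Let $q$ be a prime power and $n\ge3$. Then $\dfrac{\mathbb{E}_q(n)}{|\mathbb{P}_q(n)|}\le\dfrac12$, and equality occurs only if $n=3$ and $q\in\{2,5\}$.
   Context: $\mathbb{P}_q(n)$ denotes the set of all subspaces of $\mathbb{F}_q^n$. For subspaces $X,Y$ the subspace distance is $d_S(X,Y)=\dim X+\dim Y-2\dim(X\cap Y)$. A linear code in $\mathbb{P}_q(n)$ is a subset $\mathcal{U}\subseteq\mathbb{P}_q(n)$ with $\{0\}\in\mathcal{U}$ for which there exists a map $\boxplus:\mathcal{U}\times\mathcal{U}\to\mathcal{U}$ such that (i) $(\mathcal{U},\boxplus)$ is an abelian group; (ii) its identity element is $\{0\}$; (iii) $X\boxplus X=\{0\}$ for all $X\in\mathcal{U}$; (iv) $d_S(Y_1\boxplus X,Y_2\boxplus X)=d_S(Y_1,Y_2)$ for all $Y_1,Y_2,X\in\mathcal{U}$. It is equidistant if there is $r$ with $d_S(X,Y)=r$ for all distinct $X,Y\in\mathcal{U}$. $\mathbb{E}_q(n)$ denotes the maximum size of an equidistant linear code in $\mathbb{P}_q(n)$. *)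

(* Defs.v *)
From HB Require Import structures.
From mathcomp Require Import all_boot all_order all_algebra all_field.
From mathcomp Require Import boolp.
Set Implicit Arguments. Unset Strict Implicit. Unset Printing Implicit Defensive.
Import GRing.Theory.
Local Open Scope ring_scope.

(* Subspaces of F_q^n, i.e. elements of P_q(n); over a finite field they form
   a finite type (transported from matrices via the row-space encoding). *)
Definition subsp (F : finFieldType) (n : nat) : Type := {vspace 'rV[F]_n}.
HB.instance Definition _ (F : finFieldType) n :=
  Finite.copy (subsp F n)
    (can_type (@vector.VectorInternalTheory.vs2mxK F 'rV[F]_n)).

Section Codes.
Variables (F : finFieldType) (n : nat).

Local Notation subsp := (subsp F n).

Definition Pqn : {set subsp} := [set: subsp].

Definition dS (X Y : subsp) : nat :=
  (\dim X + \dim Y - 2 * \dim (X :&: Y))%N.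

Definition linear_code (U : {set subsp}) : Prop :=
  (0%VS : subsp) \in U /\
  exists op : subsp -> subsp -> subsp,
    (forall X Y, X \in U -> Y \in U -> op X Y \in U) /\
        (forall X Y Z, X \in U -> Y \in U -> Z \in U ->
            op X (op Y Z) = op (op X Y) Z) /\
        (forall X Y, X \in U -> Y \in U -> op X Y = op Y X) /\
        (forall X, X \in U -> op 0%VS X = X /\ op X 0%VS = X) /\
        (forall X, X \in U -> exists2 Y, Y \in U & op X Y = 0%VS) /\
        (forall X, X \in U -> op X X = 0%VS) /\
        (forall Y1 Y2 X, Y1 \in U -> Y2 \in U -> X \in U ->
            dS (op Y1 X) (op Y2 X) = dS Y1 Y2).

Definition equidistant (U : {set subsp}) : Prop :=
  exists r : nat, forall X Y, X \in U -> Y \in U -> X != Y -> dS X Y = r.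

Definition equidistant_linear_code (U : {set subsp}) : Prop :=
  linear_code U /\ equidistant U.

Definition Eqn : nat :=
  \max_(U : {set subsp} | `[< equidistant_linear_code U >]) #|U|.

End Codes.

(* Main.v *)
From Stdlib Require Import ZArith Lia List Bool.

Module RN.
Local Open Scope Z_scope.

Definition zmul (x y : Z*Z) : Z*Z :=
  (fst x * fst y - 2 * snd x * snd y, fst x * snd y + snd x * fst y + snd x * snd y).
Definition zN (x : Z*Z) : Z := fst x * fst x + fst x * snd x + 2 * snd x * snd x.
Definition zsc (s : Z) (x : Z*Z) : Z*Z := (s * fst x, s * snd x).
Fixpoint Wp (k : nat) : Z*Z := match k with O => (1,0) | S k => zmul (0,1) (Wp k) end.
Fixpoint Wbp (k : nat) : Z*Z := match k with O => (1,0) | S k => zmul (1,-1) (Wbp k) end.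

Lemma zN_mul x y : zN (zmul x y) = zN x * zN y.
Proof. destruct x, y; unfold zN, zmul; cbn [fst snd]; ring. Qed.

Lemma zmul_sc x s y : zmul x (zsc s y) = zsc s (zmul x y).
Proof. destruct x, y; unfold zsc, zmul; cbn [fst snd]; f_equal; ring. Qed.

Lemma zmul_wwb x : zmul (0,1) (zmul (1,-1) x) = (2 * fst x, 2 * snd x).
Proof. destruct x; unfold zmul; cbn [fst snd]; f_equal; ring. Qed.
Lemma zmul_wbw x : zmul (1,-1) (zmul (0,1) x) = (2 * fst x, 2 * snd x).
Proof. destruct x; unfold zmul; cbn [fst snd]; f_equal; ring. Qed.

Lemma even_or_odd a : (exists t, a = 2*t) \/ (exists t, a = 2*t+1).
Proof. destruct (Z.Even_or_Odd a) as [[t H]|[t H]]; [left|right]; exists t; lia. Qed.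

Lemma factor k : forall a b, zN (a,b) = 2^(Z.of_nat k) ->
  ~ ((exists t, a = 2*t) /\ (exists t, b = 2*t)) ->
  exists s, (s = 1 \/ s = -1) /\ ((a,b) = zsc s (Wp k) \/ (a,b) = zsc s (Wbp k)).
Proof.
induction k as [|k IH]; intros a b HN Hnd.
- simpl in HN. unfold zN in HN; cbn [fst snd] in HN.
  assert (b = 0) by nia. subst b.
  assert (a = 1 \/ a = -1) by nia.
  exists a; split; [tauto|left]; simpl; unfold zsc; cbn [fst snd]; f_equal; lia.
- rewrite Nat2Z.inj_succ, Z.pow_succ_r in HN by lia.
  unfold zN in HN; cbn [fst snd] in HN.
  destruct (even_or_odd a) as [[t Ht]|[t Ht]].
  +
    assert (Hb : exists u, b = 2*u+1).
    { destruct (even_or_odd b) as [[u Hu]|Hu]; [|exact Hu].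
      exfalso; apply Hnd; split; eexists; eassumption. }
    destruct Hb as [u Hu].
    assert (Hz : zN (t + b, -t) = 2^(Z.of_nat k)).
    { unfold zN; cbn [fst snd]. subst a. nia. }
    assert (Hab : (a,b) = zmul (0,1) (t+b, -t)).
    { unfold zmul; cbn [fst snd]; f_equal; lia. }
    destruct (IH (t+b) (-t) Hz) as [s [Hs [H1|H1]]].
    { intros [[x Hx] [y Hy]]. lia. }
    * exists s; split; [exact Hs|left].
      rewrite Hab, H1; cbn [Wp Wbp]. apply zmul_sc.
    * destruct k as [|k].
      { exists s; split; [exact Hs|left]. rewrite Hab, H1; cbn [Wp Wbp]. apply zmul_sc. }
      exfalso. rewrite H1 in Hab. cbn [Wp Wbp] in Hab. rewrite zmul_sc, zmul_wwb in Hab.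
      unfold zsc in Hab; cbn [fst snd] in Hab. pose proof (f_equal fst Hab) as Ha'; pose proof (f_equal snd Hab) as Hb'; cbn [fst snd] in Ha', Hb'.
      apply Hnd; split; [exists (s * fst (Wbp k))|exists (s * snd (Wbp k))]; lia.
  + (* a odd, so a+b even *)
    assert (Hb : exists u, b = 2*u+1).
    { destruct (even_or_odd b) as [[u Hu]|Hu]; [|exact Hu].
      exfalso. subst a b.
      assert (2 * 2 ^ Z.of_nat k =
              2 * (2*t*t + 2*t + 2*t*u + u + 4 * u * u) + 1) by (rewrite <- HN; ring).
      lia. }
    destruct Hb as [u Hu].
    assert (Hz : zN (-b, t+u+1) = 2^(Z.of_nat k)).
    { assert (E: 2 * zN (-b, t+u+1) = a*a + a*b + 2*b*b)
        by (unfold zN; cbn [fst snd]; subst a b; ring). lia. }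
    assert (Hab : (a,b) = zmul (1,-1) (-b, t+u+1)).
    { unfold zmul; cbn [fst snd]; f_equal; lia. }
    destruct (IH (-b) (t+u+1) Hz) as [s [Hs [H1|H1]]].
    { intros [[x Hx] [y Hy]]. lia. }
    * destruct k as [|k].
      { exists s; split; [exact Hs|right]. rewrite Hab, H1; cbn [Wp Wbp]. apply zmul_sc. }
      exfalso. rewrite H1 in Hab. cbn [Wp Wbp] in Hab. rewrite zmul_sc, zmul_wbw in Hab.
      unfold zsc in Hab; cbn [fst snd] in Hab. pose proof (f_equal fst Hab) as Ha'; pose proof (f_equal snd Hab) as Hb'; cbn [fst snd] in Ha', Hb'.
      apply Hnd; split; [exists (s * fst (Wp k))|exists (s * snd (Wp k))]; lia.
    * exists s; split; [exact Hs|right].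
      rewrite Hab, H1; cbn [Wp Wbp]. apply zmul_sc.
Qed.

Definition conj (x : Z*Z) : Z*Z := (fst x + snd x, - snd x).
Lemma Wbp_conj k : Wbp k = conj (Wp k).
Proof.
induction k as [|k IH]; [reflexivity|].
simpl; rewrite IH. destruct (Wp k); unfold conj, zmul; cbn [fst snd]; f_equal; ring.
Qed.


Definition NN : Z := 161642772021248.
Definition TT : nat := 172032.
Definition stepm (x : Z*Z) : Z*Z := ((-2 * snd x) mod NN, (fst x + snd x) mod NN).
Fixpoint iterm (j : nat) (x : Z*Z) : Z*Z :=
  match j with O => x | S j => iterm j (stepm x) end.
Definition Wpm (k : nat) : Z*Z := iterm k (1,0).

Lemma iterm_S j x : iterm (S j) x = stepm (iterm j x).
Proof. revert x; induction j as [|j IH]; intros x; [reflexivity|].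
  change (iterm (S (S j)) x) with (iterm (S j) (stepm x)). rewrite IH. reflexivity. Qed.

Lemma iterm_add j i x : iterm (j + i) x = iterm j (iterm i x).
Proof. revert x; induction i as [|i IH]; intros x.
  - rewrite Nat.add_0_r; reflexivity.
  - rewrite Nat.add_succ_r, (iterm_S (j+i)), (iterm_S i), IH, <- (iterm_S j); reflexivity. Qed.

Lemma Wpm_spec k : Wpm k = (fst (Wp k) mod NN, snd (Wp k) mod NN).
Proof.
induction k as [|k IH]; [reflexivity|].
unfold Wpm in *; rewrite iterm_S, IH; cbn [Wp]; unfold stepm, zmul; cbn [fst snd].
f_equal.
- rewrite Z.mul_mod_idemp_r by (unfold NN; lia). f_equal; ring.
- rewrite Z.add_mod_idemp_l, Z.add_mod_idemp_r by (unfold NN; lia). f_equal; ring.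
Qed.

Fixpoint chk (j : nat) (x : Z*Z) : bool :=
  match j with O => true
  | S j => (negb (Z.eqb (snd x) 1) && negb (Z.eqb (snd x) (NN-1))) && chk j (stepm x) end.

Lemma chk_spec j : forall x, chk j x = true -> forall i, (i < j)%nat ->
  snd (iterm i x) <> 1 /\ snd (iterm i x) <> NN - 1.
Proof.
induction j as [|j IH]; intros x H i Hi; [lia|].
simpl in H. apply andb_prop in H as [H1 H2]. apply andb_prop in H1 as [H1 H3].
destruct i as [|i].
- simpl. apply negb_true_iff, Z.eqb_neq in H1. apply negb_true_iff, Z.eqb_neq in H3. tauto.
- simpl. apply IH; [exact H2|lia].
Qed.

Lemma chk_ok : chk TT (Wpm 14) = true.
Proof. vm_compute. reflexivity. Qed.

Lemma period_ok : Wpm (TT + 14) = Wpm 14.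
Proof. vm_compute. reflexivity. Qed.

Lemma Wpm_add j i : Wpm (j + i) = iterm j (Wpm i).
Proof. unfold Wpm; apply iterm_add. Qed.

Lemma TT_pos : (0 < TT)%nat.
Proof. apply Nat.ltb_lt; vm_compute; reflexivity. Qed.

Lemma Wpm_big k : (14 <= k)%nat -> snd (Wpm k) <> 1 /\ snd (Wpm k) <> NN - 1.
Proof.
induction k as [k IH] using (well_founded_induction lt_wf). intros Hk.
destruct (Nat.lt_ge_cases k (TT + 14)) as [Hlt|Hge].
- replace k with ((k - 14) + 14)%nat by lia. rewrite Wpm_add.
  apply (chk_spec TT _ chk_ok). lia.
- replace k with ((k - TT - 14) + (TT + 14))%nat by lia.
  rewrite Wpm_add, period_ok, <- Wpm_add.
  pose proof TT_pos. apply IH; lia.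
Qed.

Lemma u_big k : (14 <= k)%nat -> snd (Wp k) <> 1 /\ snd (Wp k) <> -1.
Proof.
intros Hk. destruct (Wpm_big k Hk) as [H1 H2]. rewrite Wpm_spec in H1, H2.
cbn [snd] in H1, H2. split; intros E; rewrite E in *; [apply H1|apply H2]; reflexivity.
Qed.

Definition cands : list Z := 0 :: 1 :: 2 :: 5 :: 90 :: nil.
Definition small_check : bool :=
  forallb (fun m => forallb (fun k =>
     negb (Z.eqb (Z.of_nat m * Z.of_nat m + Z.of_nat m + 2) (2 ^ Z.of_nat k))
     || existsb (Z.eqb (Z.of_nat m)) cands) (List.seq 0 14)) (List.seq 0 91).
Lemma small_check_ok : small_check = true.
Proof. vm_compute. reflexivity. Qed.

Theorem RN_Z (q : Z) (k : nat) : 0 <= q -> q * q + q + 2 = 2 ^ Z.of_nat k ->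
  q = 0 \/ q = 1 \/ q = 2 \/ q = 5 \/ q = 90.
Proof.
intros Hq HN.
assert (Hk : (k <= 13)%nat).
{ destruct (Nat.le_gt_cases k 13) as [H|H]; [exact H|exfalso].
  assert (Hz : zN (q, 1) = 2 ^ Z.of_nat k) by (unfold zN; cbn [fst snd]; lia).
  destruct (factor k q 1 Hz) as [s [Hs [E|E]]].
  { intros [_ [t Ht]]. lia. }
  - pose proof (f_equal snd E) as E2. unfold zsc in E2; cbn [snd] in E2.
    destruct (u_big k ltac:(lia)) as [U1 U2].
    destruct Hs; subst s; [apply U1|apply U2]; lia.
  - pose proof (f_equal snd E) as E2. unfold zsc in E2; cbn [snd] in E2.
    rewrite Wbp_conj in E2; unfold conj in E2; cbn [snd] in E2.
    destruct (u_big k ltac:(lia)) as [U1 U2].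
    destruct Hs; subst s; [apply U2|apply U1]; lia. }
assert (Hq90 : q <= 90).
{ assert (2 ^ Z.of_nat k <= 2 ^ 13) by (apply Z.pow_le_mono_r; lia). nia. }
pose proof small_check_ok as C. unfold small_check in C.
rewrite forallb_forall in C.
specialize (C (Z.to_nat q) ltac:(apply in_seq; lia)).
rewrite forallb_forall in C.
specialize (C k ltac:(apply in_seq; lia)).
rewrite Z2Nat.id in C by lia.
apply orb_prop in C as [C|C].
- apply negb_true_iff, Z.eqb_neq in C. contradiction.
- apply existsb_exists in C as [c [Hc Hq']]. apply Z.eqb_eq in Hq'.
  unfold cands in Hc; simpl in Hc. intuition (subst; lia).
Qed.

End RN.

Require Import Defs.
From HB Require Import structures.
From mathcomp Require Import all_boot all_order all_algebra all_field all_fingroup all_solvable.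
From mathcomp Require Import boolp zify ring lra.
Set Implicit Arguments. Unset Strict Implicit. Unset Printing Implicit Defensive.
Import GRing.Theory Num.Theory.

Section Pow2.
Variables (T : finType) (op : T -> T -> T) (z : T).
Hypotheses (opA : associative op) (op0 : left_id z op) (opK : forall x, op x x = z).
Definition gT : Type := T.
HB.instance Definition _ := Finite.on gT.
Lemma opV : left_inverse z (@id gT) op. Proof. by move=> x; apply: opK. Qed.
HB.instance Definition _ := Finite_isGroup.Build gT opA op0 opV.

Lemma card_pow2 : exists k, #|T| = (2 ^ k)%N.
Proof.
have: 2.-nat #|T|.
  have T0 : 0 < #|T| by apply/card_gt0P; exists z; rewrite inE.
  apply/(pnatP _ T0) => p pp pdT.
  have pdG : p %| #|[set: gT]|.
    by rewrite cardsT (@bij_eq_card gT T id); [exact: pdT | exists id].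

  have [x _ ox] := Cauchy pp pdG.
  have x2 : (x ^+ 2 = 1)%g by rewrite expgS expg1; apply: opK.
  have : (#[x] %| 2)%g by rewrite order_dvdn x2.
  by rewrite ox (dvdn_prime2 pp) // => /eqP ->; rewrite inE.
by case/p_natP => k ->; exists k.
Qed.
End Pow2.

Local Open Scope ring_scope.



Section Geo.
Variables (F : finFieldType) (n : nat).
Local Notation V := {vspace 'rV[F]_n}.
Local Notation vT := 'rV[F]_n.

Lemma dimf : \dim (fullv : V) = n.
Proof. by rewrite dimvf /= /dim /= mul1n. Qed.

Lemma dim_le (X : V) : (\dim X <= n)%N.
Proof. by have := dimvS (subvf X); rewrite dimf. Qed.

Lemma eq_dimS (X Y : V) : (X <= Y)%VS -> (\dim Y <= \dim X)%N -> X = Y.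
Proof.
move=> sXY dYX; apply/subv_anti; rewrite sXY /=.
by have [_ <-] := dimv_leqif_sup sXY; rewrite eqn_leq dYX dimvS.
Qed.

Lemma notin_exists (W : V) : (\dim W < n)%N -> exists v : vT, v \notin W.
Proof.
move=> dW; have : ~~ ((fullv : V) <= W)%VS.
  by apply/negP => /dimvS; rewrite dimf; lia.
by case/subvPn => v _ vW; exists v.
Qed.

Lemma line_cap0 (v : vT) (W : V) : v \notin W -> (<[v]> :&: W = 0)%VS.
Proof.
move=> vW; apply/eqP; rewrite -subv0; apply/subvP => x /memv_capP [/vlineP [k ->] kW].
rewrite memv0; have [->|k0] := eqVneq k 0; first by rewrite scale0r.
by move/(memvZ k^-1): kW; rewrite scalerA mulVf // scale1r (negPf vW).
Qed.

Lemma dim_line (v : vT) (W : V) : v \notin W -> \dim (<[v]> : V) = 1%N.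
Proof. by move=> vW; rewrite dim_vline; case: eqP vW => // ->; rewrite mem0v. Qed.

Lemma exists_dim d : (d <= n)%N -> exists X : V, \dim X = d.
Proof.
elim: d => [|d IH] dn; first by exists 0%VS; rewrite dimv0.
have [X dX] := IH (ltnW dn).
have [v vX] := notin_exists (W := X) ltac:(lia).
exists (X + <[v]>)%VS; rewrite dimv_disjoint_sum ?(dim_line vX) ?dX ?addn1 //.
by rewrite capvC line_cap0.
Qed.


Lemma dim_addL (X L H : V) : (X <= H)%VS -> (L :&: H = 0)%VS ->
  \dim (X + L) = (\dim X + \dim L)%N.
Proof.
move=> XH LH; apply: dimv_disjoint_sum; apply/eqP; rewrite -subv0 -LH.
by rewrite capvC capvS.
Qed.

Lemma modL (X L H : V) : (X <= H)%VS -> (L :&: H = 0)%VS -> ((X + L) :&: H = X)%VS.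
Proof. by move=> XH LH; rewrite -vspace_modl // LH addv0. Qed.

Lemma dim_capH (X H : V) : (\dim H).+1 = n -> ~~ (X <= H)%VS ->
  (\dim (X :&: H)).+1 = \dim X.
Proof.
move=> dH XH; have := dimv_sum_cap X H.
have : \dim (X + H) = n.
  have lt : (\dim H < \dim (X + H))%N.
    rewrite ltn_neqAle dimvS ?addvSr // andbT.
    apply/negP => /eqP E; have : (H + X)%VS = H.
      by apply/esym/eq_dimS; [rewrite addvSl | rewrite addvC E].
    by move/addv_idPl; apply/negP.
  have := dim_le (X + H); lia.
move=> ->; lia.
Qed.

Lemma inj_bound (U : {set subsp F n}) (phi : subsp F n -> subsp F n) :
  {in U &, injective phi} -> (forall X, X \in U -> phi X \notin U) ->
  (2 * #|U| <= #|Pqn F n|)%N /\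
  (forall W, W \notin U -> W \notin phi @: U -> (2 * #|U| < #|Pqn F n|)%N).
Proof.
move=> inj nU.
have disj : U :&: phi @: U = set0.
  apply/setP => W; rewrite !inE; apply/negP => /andP [WU /imsetP [X XU E]].
  by move: WU; rewrite E (negPf (nU X XU)).
have cU : #|U :|: phi @: U| = (2 * #|U|)%N.
  by rewrite cardsU disj cards0 subn0 card_in_imset // mul2n addnn.
split; first by rewrite -cU /Pqn cardsT max_card.
move=> W WU Wi; rewrite -cU; apply: proper_card; rewrite properT.
by apply/negP => /eqP E; move: (in_setT W); rewrite -E inE (negPf WU) (negPf Wi).
Qed.


Lemma dim0_eq (X : V) : \dim X = 0%N -> X = 0%VS.
Proof. by move/eqP; rewrite dimv_eq0 => /eqP. Qed.

Lemma line_hyper : (1 <= n)%N -> exists L H : V,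
  [/\ \dim L = 1%N, (\dim H).+1 = n, (L :&: H = 0)%VS & (L + H = fullv)%VS].
Proof.
move=> n1; have [v v0] := notin_exists (W := 0%VS) ltac:(rewrite dimv0; lia).
have dL := dim_line v0.
exists <[v]>%VS, (<[v]>^C)%VS; split => //; last by rewrite addv_complf.
  by rewrite dimv_compl dimf dL; lia.
by rewrite capv_compl.
Qed.

Lemma case_s2 (U : {set subsp F n}) s : (2 <= s)%N -> (2 <= n)%N ->
  (forall Y, Y \in U -> \dim Y = 0%N \/ \dim Y = (2*s)%N) ->
  (forall X Y, X \in U -> Y \in U -> \dim X = (2*s)%N -> \dim Y = (2*s)%N -> X <> Y ->
     \dim (X :&: Y) = s) ->
  (2 * #|U| < #|Pqn F n|)%N.
Proof.
move=> s2 n2 hd hc.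
have [L [H [dL dH LH LHf]]] := line_hyper (ltnW n2).
have [v' v'L] := notin_exists (W := L) ltac:(lia).
pose phi (X : subsp F n) : subsp F n :=
  if (\dim X == 0)%N then L else if (X <= H)%VS then (X + L)%VS else (X :&: H)%VS.
have dphi1 X : \dim X = (2*s)%N -> (X <= H)%VS -> \dim (phi X) = (2*s).+1.
  move=> dX XH; rewrite /phi dX muln_eq0 /= (eqn0Ngt s) (ltnW s2) /= XH.
  by rewrite (dim_addL XH LH) dX dL addn1.
have dphi2 X : \dim X = (2*s)%N -> ~~ (X <= H)%VS -> (\dim (phi X)).+1 = (2*s)%N.
  move=> dX XH; rewrite /phi dX muln_eq0 /= (eqn0Ngt s) (ltnW s2) /= (negPf XH).
  by rewrite -dX dim_capH.
have phi0 X : \dim X = 0%N -> phi X = L by move=> dX; rewrite /phi dX eqxx.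
have [inj nU] : {in U &, injective phi} /\ (forall X, X \in U -> phi X \notin U).
  split.
    move=> X Y XU YU E.
    case: (hd X XU) => dX; case: (hd Y YU) => dY.
    - by rewrite (dim0_eq dX) (dim0_eq dY).
    - exfalso; move: E; rewrite (phi0 _ dX) => E.
      case: (boolP (Y <= H)%VS) => YH.
        by have := dphi1 _ dY YH; rewrite -E dL; lia.
      by have := dphi2 _ dY YH; rewrite -E dL; lia.
    - exfalso; move: E; rewrite (phi0 _ dY) => E.
      case: (boolP (X <= H)%VS) => XH.
        by have := dphi1 _ dX XH; rewrite E dL; lia.
      by have := dphi2 _ dX XH; rewrite E dL; lia.
    - case: (boolP (X <= H)%VS) => XH; case: (boolP (Y <= H)%VS) => YH.
      + move: E; rewrite /phi dX dY muln_eq0 /= (eqn0Ngt s) (ltnW s2) /= XH YH => E.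
        by rewrite -(modL XH LH) E modL.
      + by have := dphi1 _ dX XH; have := dphi2 _ dY YH; rewrite E; lia.
      + by have := dphi2 _ dX XH; have := dphi1 _ dY YH; rewrite E; lia.
      + case: (eqVneq X Y) => [//|/eqP nXY]; exfalso.
        have := hc X Y XU YU dX dY nXY.
        have sub : (X :&: H <= X :&: Y)%VS.
          move: E; rewrite /phi dX dY muln_eq0 /= (eqn0Ngt s) (ltnW s2) /=.
          rewrite (negPf XH) (negPf YH) => E.
          by rewrite subv_cap capvSl /= E capvSl.
        have := dimvS sub; have := dphi2 _ dX XH.
        rewrite /phi dX muln_eq0 /= (eqn0Ngt s) (ltnW s2) /= (negPf XH); lia.
  move=> X XU; apply/negP => pU.
  case: (hd _ pU) => dp; case: (hd X XU) => dX.
  - by move: dp; rewrite (phi0 _ dX) dL.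
  - case: (boolP (X <= H)%VS) => XH.
      by have := dphi1 _ dX XH; lia.
    by have := dphi2 _ dX XH; lia.
  - by move: dp; rewrite (phi0 _ dX) dL; lia.
  - case: (boolP (X <= H)%VS) => XH.
      by have := dphi1 _ dX XH; lia.
    by have := dphi2 _ dX XH; lia.
have [_ strict] := inj_bound inj nU.
have dL' := dim_line v'L.
apply: (strict <[v']>%VS).
  by apply/negP => /hd; rewrite dL'; lia.
apply/negP => /imsetP [X XU E].
case: (hd X XU) => dX.
  move: v'L; rewrite -(phi0 _ dX) -E; by rewrite memv_line.
case: (boolP (X <= H)%VS) => XH.
  by have := dphi1 _ dX XH; rewrite -E dL'; lia.
by have := dphi2 _ dX XH; rewrite -E dL'; lia.
Qed.


Lemma case_s1 (U : {set subsp F n}) (X0 Y0 : subsp F n) : (4 <= n)%N ->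
  (forall Y, Y \in U -> \dim Y = 0%N \/ \dim Y = 2%N) ->
  (forall X Y, X \in U -> Y \in U -> \dim X = 2%N -> \dim Y = 2%N -> X <> Y ->
     \dim (X :&: Y) = 1%N) ->
  X0 \in U -> Y0 \in U -> \dim X0 = 2%N -> \dim Y0 = 2%N -> X0 <> Y0 ->
  (2 * #|U| < #|Pqn F n|)%N.
Proof.
move=> n4 hd hc X0U Y0U dX0 dY0 nXY0.
pose p : V := (X0 :&: Y0)%VS; pose W : V := (X0 + Y0)%VS.
have dp : \dim p = 1%N by apply: hc.
have dW : \dim W = 3%N by have := dimv_sum_cap X0 Y0; rewrite -/p -/W dp dX0 dY0; lia.
have pX0 : (p <= X0)%VS by rewrite capvSl.
have pY0 : (p <= Y0)%VS by rewrite capvSr.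
have pW : (p <= W)%VS by rewrite (subv_trans pX0) // addvSl.
have line_eq (a b : V) : (a <= b)%VS -> \dim a = 1%N -> \dim b = 1%N -> a = b.
  by move=> ab da db; apply: eq_dimS => //; rewrite da db.
have ha Z : Z \in U -> \dim Z = 2%N -> ~~ (p <= Z)%VS -> (Z <= W)%VS.
  move=> ZU dZ pZ.
  have nZX : Z <> X0 by move=> E; move: pZ; rewrite E pX0.
  have nZY : Z <> Y0 by move=> E; move: pZ; rewrite E pY0.
  pose a : V := (Z :&: X0)%VS; pose b : V := (Z :&: Y0)%VS.
  have da : \dim a = 1%N by apply: hc.
  have db : \dim b = 1%N by apply: hc.
  have nab : a <> b.
    move=> Eab; have ap : (a <= p)%VS by rewrite subv_cap capvSr /= Eab capvSr.
    by move: pZ; rewrite -(line_eq _ _ ap da dp) capvSl.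
  have dab : \dim (a :&: b) = 0%N.
    have := dimvS (capvSl a b); rewrite da.
    case E: (\dim (a :&: b)) => [//|[|//]] _.
    have E1 := line_eq _ _ (capvSl a b) E da.
    have E2 := line_eq _ _ (capvSr a b) E db.
    by exfalso; apply: nab; rewrite -[LHS]E1 E2.
  have sab : (a + b <= Z)%VS by rewrite subv_add !capvSl.
  have dsab : \dim (a + b) = 2%N by have := dimv_sum_cap a b; rewrite dab da db; lia.
  have -> : Z = (a + b)%VS by apply/esym/eq_dimS => //; rewrite dsab dZ.
  by apply: addvS; rewrite capvSr.
have SP : (forall Z, Z \in U -> \dim Z = 2%N -> (p <= Z)%VS) \/
   exists Z2, [/\ Z2 \in U, \dim Z2 = 2%N & ~~ (p <= Z2)%VS].
    case: (pickP [pred Z | (Z \in U) && (\dim Z == 2%N) && ~~ (p <= Z)%VS]) => [Z /= /andP [/andP [ZU /eqP dZ] pZ]|none].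
      by right; exists Z.
    left => Z ZU dZ; have := none Z; rewrite /= ZU dZ eqxx /=; by case: (p <= Z)%VS.
case: SP => [star|[Z2 [Z2U dZ2 pZ2]]].
-
  pose H : V := (p^C)%VS.
  have pH : (p :&: H = 0)%VS by rewrite capv_compl.
  have dH : (\dim H).+1 = n by rewrite dimv_compl dimf dp; lia.
  have ZH Z : Z \in U -> \dim Z = 2%N -> ~~ (Z <= H)%VS.
    move=> ZU dZ; apply/negP => ZH; have pH' : (p <= H)%VS := subv_trans (star Z ZU dZ) ZH.
    by move: dp; rewrite -(capv_idPl pH') pH dimv0.
  have dZH Z : Z \in U -> \dim Z = 2%N -> \dim (Z :&: H) = 1%N.
    by move=> ZU dZ; have := dim_capH dH (ZH Z ZU dZ); rewrite dZ; case.
  have recon Z : Z \in U -> \dim Z = 2%N -> Z = (p + (Z :&: H))%VS.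
    move=> ZU dZ; apply/esym/eq_dimS.
      by rewrite subv_add star //= capvSl.
    rewrite dimv_disjoint_sum ?dp ?dZH ?dZ //.
    by apply/eqP; rewrite -subv0 -pH capvS // capvSr.
  pose phi (X : subsp F n) : subsp F n := if (\dim X == 0)%N then fullv else (X :&: H)%VS.
  have [inj nU] : {in U &, injective phi} /\ (forall X, X \in U -> phi X \notin U).
    split.
      move=> X Y XU YU; rewrite /phi.
      case: (hd X XU) => dX; case: (hd Y YU) => dY; rewrite dX dY /=.
      - by rewrite (dim0_eq dX) (dim0_eq dY).
      - by move=> E; exfalso; have := dZH Y YU dY; rewrite -E dimf => h; move: n4; rewrite h.
      - by move=> E; exfalso; have := dZH X XU dX; rewrite E dimf => h; move: n4; rewrite h.
      - by move=> E; rewrite (recon X) // (recon Y) // E.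
    move=> X XU; apply/negP => /hd; rewrite /phi.
    case: (hd X XU) => dX; rewrite dX /=; first by rewrite dimf; case=> h; move: n4; rewrite h.
    by rewrite dZH //; case.
  have [_ strict] := inj_bound inj nU.
  apply: (strict p); first by apply/negP => /hd; rewrite dp; case.
  apply/negP => /imsetP [X XU]; rewrite /phi.
  case: (hd X XU) => dX; rewrite dX /=; first by move=> E; move: dp; rewrite E dimf => h; move: n4; rewrite h.
  move=> E; have pH' : (p <= H)%VS by rewrite E capvSr.
  by move: dp; rewrite -(capv_idPl pH') pH dimv0.
-
  have Z2W := ha Z2 Z2U dZ2 pZ2.
  have plane Z : Z \in U -> \dim Z = 2%N -> (Z <= W)%VS.
    move=> ZU dZ; case: (boolP (p <= Z)%VS) => pZ; last exact: ha.
    apply/negP => ZW.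
    have nZ : Z <> Z2 by move=> E; move: ZW; rewrite E Z2W.
    have dZZ2 := hc Z Z2 ZU Z2U dZ dZ2 nZ.
    have dZW : \dim (Z :&: W) = 1%N.
      have pZW : (p <= Z :&: W)%VS by rewrite subv_cap pZ pW.
      have := dimvS pZW; rewrite dp.
      have := dimvS (capvSl Z W); rewrite dZ.
      case E: (\dim (Z :&: W)) => [|[|[|//]]] //= _ _.
      have : (Z :&: W)%VS = Z by apply: eq_dimS; rewrite ?capvSl // E dZ.
      by move/capv_idPl/ZW.
    have E1 : (Z :&: W)%VS = p by apply/esym/line_eq => //; rewrite subv_cap pZ.
    have E2 : (Z :&: Z2)%VS = p.
      apply: line_eq => //; rewrite -E1; exact: capvS.
    by move: pZ2; rewrite -E2 capvSr.
  have [v vW] := notin_exists (W := W) ltac:(by rewrite dW).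
  pose L : V := <[v]>%VS.
  have LW : (L :&: W = 0)%VS by apply: line_cap0.
  have dL : \dim L = 1%N by apply: dim_line vW.
  pose phi (X : subsp F n) : subsp F n := if (\dim X == 0)%N then fullv else (X + L)%VS.
  have dXL X : X \in U -> \dim X = 2%N -> \dim (X + L) = 3%N.
    by move=> XU dX; rewrite (dim_addL (plane X XU dX) LW) dX dL.
  have [inj nU] : {in U &, injective phi} /\ (forall X, X \in U -> phi X \notin U).
    split.
      move=> X Y XU YU; rewrite /phi.
      case: (hd X XU) => dX; case: (hd Y YU) => dY; rewrite dX dY /=.
      - by rewrite (dim0_eq dX) (dim0_eq dY).
      - by move=> E; exfalso; have := dXL Y YU dY; rewrite -E dimf => h; move: n4; rewrite h.
      - by move=> E; exfalso; have := dXL X XU dX; rewrite E dimf => h; move: n4; rewrite h.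
      - by move=> E; rewrite -(modL (plane X XU dX) LW) E modL // plane.
    move=> X XU; apply/negP => /hd; rewrite /phi.
    case: (hd X XU) => dX; rewrite dX /=; first by rewrite dimf; case=> h; move: n4; rewrite h.
    by rewrite dXL //; case.
  have [_ strict] := inj_bound inj nU.
  apply: (strict L); first by apply/negP => /hd; rewrite dL; case.
  apply/negP => /imsetP [X XU]; rewrite /phi.
  case: (hd X XU) => dX; rewrite dX /=; first by move=> E; move: dL; rewrite E dimf => h; move: n4; rewrite h.
  by move=> E; move: dL; rewrite E dXL.
Qed.


Local Notation q := #|F|.

Lemma count_mem (Y : V) : #|[set v : vT | v \in Y]| = (q ^ \dim Y)%N.
Proof. by rewrite cardsE card_vspace. Qed.

Lemma count_nz (Y : V) : #|[set v : vT | (v \in Y) && (v != 0)]| = (q ^ \dim Y).-1.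
Proof.
rewrite -count_mem [in RHS](cardsD1 0) inE mem0v /=.
by apply: eq_card => v; rewrite !inE andbC.
Qed.

Lemma line_eqP (v : vT) (X : subsp F n) : v != 0 -> \dim X = 1%N ->
  (((<[v]>%VS : subsp F n) == X) = (v \in X)).
Proof.
move=> v0 dX; apply/eqP/idP => [<-|vX]; first exact: memv_line.
by apply: eq_dimS; rewrite ?dX ?dim_vline ?v0 // -memvE.
Qed.

Lemma count_lines : (#|[set X : subsp F n | \dim X == 1%N]| * (q.-1) = (q ^ n).-1)%N.
Proof.
have := count_nz fullv; rewrite dimf => <-.
rewrite -[in RHS]sum1_card (partition_big (fun v : vT => (<[v]>%VS : subsp F n))
   (fun X : subsp F n => \dim X == 1%N)) /=; last first.
  by move=> v; rewrite inE memvf /= => v0; rewrite dim_vline v0.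
rewrite -sum1_card big_distrl /=; apply: eq_big => [X|X]; first by rewrite inE.
rewrite inE => dX.
have -> : (1 * q.-1 = (q ^ \dim X).-1)%N by rewrite (eqP dX) expn1 mul1n.
rewrite -count_nz -sum1dep_card; apply: eq_bigl => v.
rewrite inE memvf /=; case: (eqVneq v 0) => [->|v0] /=; first by rewrite andbF.
by rewrite andbT line_eqP // (eqP dX).
Qed.


Definition T2 (Y : V) := [set ab : vT * vT |
   [&& ab.1 \in Y, ab.1 != 0, ab.2 \in Y & ab.2 \notin <[ab.1]>%VS]].

Lemma count_pairs (Y : V) : #|T2 Y| = ((q ^ \dim Y).-1 * (q ^ \dim Y - q))%N.
Proof.
transitivity (\sum_(a | (a \in Y) && (a != 0 :> vT)) \sum_(b | (b \in Y) && (b \notin <[a]>%VS)) 1%N).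
  rewrite pair_big_dep sum1dep_card; apply: eq_card => ab; rewrite !inE /=.
  by rewrite !andbA.
rewrite (eq_bigr (fun _ => q ^ \dim Y - q)%N); last first.
  move=> a /andP [aY a0]; rewrite sum1dep_card.
  have -> : [set b : vT | (b \in Y) && (b \notin <[a]>%VS)] =
     [set b : vT | b \in Y] :\: [set b : vT | b \in <[a]>%VS].
    by apply/setP => b; rewrite !inE andbC.
  rewrite cardsD count_mem.
  have -> : [set b : vT | b \in Y] :&: [set b : vT | b \in <[a]>%VS] = [set b : vT | b \in <[a]>%VS].
    apply/setP => b; rewrite !inE andb_idl // => /vlineP [k ->]; exact: memvZ.
  by rewrite count_mem dim_vline a0 expn1.
by rewrite sum_nat_cond_const count_nz.
Qed.

Lemma dim_span2 (a b : vT) : a != 0 -> b \notin <[a]>%VS -> \dim (<[a]> + <[b]> : V) = 2%N.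
Proof.
move=> a0 ba; have H : (<[a]> :&: <[b]> = 0 :> V)%VS by rewrite capvC line_cap0.
by rewrite dimv_disjoint_sum // dim_vline a0 (dim_line ba).
Qed.

Lemma count_planes : (#|[set X : subsp F n | \dim X == 2%N]| * ((q ^ 2).-1 * (q ^ 2 - q))
   = (q ^ n).-1 * (q ^ n - q))%N.
Proof.
have := count_pairs fullv; rewrite dimf => <-.
rewrite -[in RHS]sum1_card (partition_big (fun ab : vT * vT => (<[ab.1]> + <[ab.2]>)%VS : subsp F n)
   (fun X : subsp F n => \dim X == 2%N)) /=; last first.
  by move=> [a b]; rewrite inE /= => /and4P [_ a0 _ ba]; rewrite dim_span2.
rewrite -sum1_card big_distrl /=; apply: eq_big => [X|X]; first by rewrite inE.
rewrite inE => dX.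
have -> : (1 * ((q ^ 2).-1 * (q ^ 2 - q)) = (q ^ \dim X).-1 * (q ^ \dim X - q))%N
  by rewrite (eqP dX) mul1n.
rewrite -count_pairs -sum1_card; apply: eq_bigl => [[a b]].
rewrite !inE /= !memvf /=.
apply/idP/idP.
  case/and4P => aX a0 bX ba; rewrite a0 ba /=.
  apply/eqP; apply: eq_dimS; last by rewrite dim_span2 // (eqP dX).
  by rewrite subv_add -!memvE aX bX.
case/andP => /andP [a0 ba] /eqP <-; rewrite a0 ba /= andbT.
by rewrite (subvP (addvSl _ _) _ (memv_line a)) (subvP (addvSr _ _) _ (memv_line b)).
Qed.


Lemma sum_ind (P : pred (subsp F n)) : (\sum_(X : subsp F n) (P X : nat))%N = #|[set X | P X]|.
Proof. by rewrite -sum1dep_card [RHS]big_mkcond; apply: eq_bigr => X _; case: (P X). Qed.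

Lemma q_ge2 : (2 <= q)%N.
Proof. exact: finNzRing_gt1. Qed.

Lemma case_n3 (U : {set subsp F n}) : n = 3%N -> (0%VS : subsp F n) \in U ->
  (forall Y, Y \in U -> \dim Y = 0%N \/ \dim Y = 2%N) ->
  (2 * #|U| <= #|Pqn F n|)%N /\ ((2 * #|U| = #|Pqn F n|)%N -> #|U| = (q ^ 2 + q + 2)%N).
Proof.
move=> hn U0 hd.
have E1 := count_lines; rewrite [in RHS]hn in E1.
have E2 := count_planes; rewrite [in RHS]hn in E2.
move: E1 E2.
set c1 := #|[set X : subsp F n | \dim X == 1%N]|.
set c2 := #|[set X : subsp F n | \dim X == 2%N]|.
move=> E1 E2.
have [m qm] : exists m, q = m.+2 by exists (q - 2)%N; have := q_ge2; lia.
have eA : ((m.+2 ^ 2).-1 = m.+1 * m.+3)%N.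
  by rewrite (_ : (m.+2 ^ 2 = m.+1 * m.+3 + 1)%N) ?addn1 //; ring.
have eB : (m.+2 ^ 2 - m.+2 = m.+2 * m.+1)%N.
  by rewrite (_ : (m.+2 ^ 2 = m.+2 * m.+1 + m.+2)%N) ?addnK //; ring.
have eC : ((m.+2 ^ 3).-1 = (m.+2 ^ 2 + m.+2 + 1) * m.+1)%N.
  by rewrite (_ : (m.+2 ^ 3 = (m.+2 ^ 2 + m.+2 + 1) * m.+1 + 1)%N) ?addn1 //; ring.
have eD : (m.+2 ^ 3 - m.+2 = m.+2 * m.+1 * m.+3)%N.
  by rewrite (_ : (m.+2 ^ 3 = m.+2 * m.+1 * m.+3 + m.+2)%N) ?addnK //; ring.
rewrite qm in E1 E2 *.
have c1E : c1 = (m.+2 ^ 2 + m.+2 + 1)%N.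
  apply/eqP; rewrite -(@eqn_pmul2r (m.+2).-1) //; apply/eqP; rewrite E1 eC //.
have c2E : c2 = (m.+2 ^ 2 + m.+2 + 1)%N.
  move: E2; rewrite eA eB eC eD => E2.
  apply/eqP; rewrite -(@eqn_pmul2r (m.+1 * m.+3 * (m.+2 * m.+1))) //; apply/eqP.
  by rewrite E2; ring.
have hP : (2 + c1 + c2 <= #|Pqn F n|)%N.
  have c0 : (1 <= #|[set X : subsp F n | \dim X == 0%N]|)%N.
    by apply/card_gt0P; exists 0%VS; rewrite inE dimv0.
  have c3 : (1 <= #|[set X : subsp F n | \dim X == 3%N]|)%N.
    by apply/card_gt0P; exists fullv; rewrite inE dimf hn.
  rewrite /Pqn cardsT -sum1_card.
  apply: (@leq_trans (\sum_(X : subsp F n) ((\dim X == 0%N) + (\dim X == 1%N)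
       + (\dim X == 2%N) + (\dim X == 3%N)))%N).
    rewrite !big_split /= !sum_ind /= -/c1 -/c2.
    apply: leq_trans (leq_add (leq_add (leq_add c0 (leqnn c1)) (leqnn c2)) c3); lia.
  apply: leq_sum => X _; case: (\dim X) => [|[|[|[|k]]]] //.
have hU : (#|U| <= 1 + c2)%N.
  apply: (@leq_trans #|[set 0%VS : subsp F n] :|: [set X : subsp F n | \dim X == 2%N]|).
    apply: subset_leq_card; apply/subsetP => X XU; rewrite !inE.
    case: (hd X XU) => dX; last by rewrite dX eqxx orbT.
    by rewrite (dim0_eq dX) eqxx.
  by rewrite cardsU cards1 -/c2; lia.
split; first lia.
move=> E; lia.
Qed.


Lemma Pqn_ge5 : (3 <= n)%N -> (5 <= #|Pqn F n|)%N.
Proof.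
move=> n3.
have [v1 v1n] := notin_exists (W := 0%VS) ltac:(rewrite dimv0; lia).
have v10 : v1 != 0 by move: v1n; rewrite memv0.
have dL1 : \dim (<[v1]> : V) = 1%N by rewrite dim_vline v10.
have [v2 v2n] := notin_exists (W := <[v1]>%VS) ltac:(rewrite dL1; lia).
have dL2 := dim_line v2n.
have dP := dim_span2 v10 v2n.
have L12 : (<[v1]>%VS : subsp F n) != <[v2]>%VS.
  by apply/eqP => E; move: v2n; rewrite E memv_line.
have c0 : (1 <= #|[set X : subsp F n | \dim X == 0%N]|)%N.
  by apply/card_gt0P; exists 0%VS; rewrite inE dimv0.
have c1 : (2 <= #|[set X : subsp F n | \dim X == 1%N]|)%N.
  have e2 : #|[set (<[v1]>%VS : subsp F n); (<[v2]>%VS : subsp F n)]| = 2%N by rewrite cards2 L12.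
  rewrite -e2.
  by apply: subset_leq_card; apply/subsetP => X; rewrite !inE => /orP [] /eqP ->;
    rewrite ?dL1 ?dL2.
have c2 : (1 <= #|[set X : subsp F n | \dim X == 2%N]|)%N.
  by apply/card_gt0P; exists (<[v1]> + <[v2]>)%VS; rewrite inE dP.
have c3 : (1 <= #|[set X : subsp F n | \dim X == n]|)%N.
  by apply/card_gt0P; exists fullv; rewrite inE dimf.
rewrite /Pqn cardsT -sum1_card.
apply: (@leq_trans (\sum_(X : subsp F n) ((\dim X == 0%N) + (\dim X == 1%N)
     + (\dim X == 2%N) + (\dim X == n)))%N).
  rewrite !big_split /= !sum_ind /=.
  apply: leq_trans (leq_add (leq_add (leq_add c0 c1) c2) c3) => //.
apply: leq_sum => X _; move: (\dim X) => d; lia.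
Qed.

Lemma arith1 s d : (d <= 2 * s)%N -> (2 * s + 2 * s - 2 * d = 2 * s)%N -> d = s.
Proof. lia. Qed.
Lemma arith2 r s : (s <= r)%N -> (r + r - 2 * s = r)%N -> r = (2 * s)%N.
Proof. lia. Qed.

Lemma dS0 (X : subsp F n) : dS X 0%VS = \dim X.
Proof. by rewrite /dS capv0 dimv0 muln0 addn0 subn0. Qed.

Theorem geo (U : {set subsp F n}) : (3 <= n)%N -> equidistant_linear_code U ->
  (2 * #|U| <= #|Pqn F n|)%N /\
  ((2 * #|U| = #|Pqn F n|)%N -> n = 3%N /\ #|U| = (q ^ 2 + q + 2)%N).
Proof.
move=> n3 [[U0 _] [r hr]].
have strict : (2 * #|U| < #|Pqn F n|)%N -> (2 * #|U| <= #|Pqn F n|)%N /\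
  ((2 * #|U| = #|Pqn F n|)%N -> n = 3%N /\ #|U| = (q ^ 2 + q + 2)%N).
  by move=> h; split; [exact: ltnW | move=> E; rewrite E ltnn in h].
case: (leqP #|U| 2) => hU.
  by apply: strict; have := Pqn_ge5 n3; lia.
pose z : subsp F n := 0%VS.
have Uz : z \in U := U0.
have : (1 < #|U :\ z|)%N by move: hU; rewrite (cardsD1 z U) Uz add1n ltnS.
case/card_gt1P => X0 [Y0 [X0U Y0U nXY]].
move: X0U Y0U; rewrite !inE => /andP [X00 X0U] /andP [Y00 Y0U].
have nz X : X \in U -> X != 0%VS -> \dim X = r.
  move=> XU Xn; rewrite -dS0; apply: hr => //; by rewrite eq_sym.
have dX0 := nz X0 X0U X00; have dY0 := nz Y0 Y0U Y00.
set s := \dim (X0 :&: Y0).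
have rs : r = (2 * s)%N.
  have := hr X0 Y0 X0U Y0U nXY; rewrite /dS dX0 dY0 -/s.
  by apply: arith2; have := dimvS (capvSl X0 Y0); rewrite -/s dX0.
have hd Y : Y \in U -> \dim Y = 0%N \/ \dim Y = (2 * s)%N.
  move=> YU; case: (eqVneq Y 0%VS) => [->|Yn]; first by left; rewrite dimv0.
  by right; rewrite nz // rs.
have hc X Y : X \in U -> Y \in U -> \dim X = (2*s)%N -> \dim Y = (2*s)%N -> X <> Y ->
    \dim (X :&: Y) = s.
  move=> XU YU dX dY /eqP nXY0; have := hr X Y XU YU nXY0; rewrite /dS dX dY rs.
  by apply: arith1; have := dimvS (capvSl X Y); rewrite dX.
have s1 : (1 <= s)%N.
  rewrite lt0n; apply/negP => /eqP s0; move: dX0; rewrite rs s0 => /dim0_eq E.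
  by rewrite E eqxx in X00.
case: (leqP 2 s) => s2.
  by apply: strict; apply: (case_s2 s2 ltac:(lia) hd hc).
have s_1 : s = 1%N by lia.
rewrite rs s_1 in dX0 dY0; rewrite s_1 in hd hc.
case: (leqP 4 n) => n4.
  apply: strict; apply: (case_s1 (X0 := X0) (Y0 := Y0) n4 hd hc) => //.
  exact/eqP.
have n_3 : n = 3%N by lia.
have [h1 h2] := case_n3 n_3 U0 hd.
by split => // E; split => //; apply: h2.
Qed.

End Geo.

Lemma card_not90 (F : finFieldType) : #|F| <> 90%N.
Proof.
move=> h.
have /is_abelemP [p pp /abelem_pgroup pg] := finField_is_abelem F.
have e := card_pgroup pg; rewrite cardsT h in e.
have : (2 %| p ^ logn p 90)%N by rewrite -e.
rewrite Euclid_dvdX // => /andP [d2 _].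
have p2 : p = 2%N by apply/esym/eqP; rewrite -(dvdn_prime2 _ pp).
have : (3 %| p ^ logn p 90)%N by rewrite -e.
by rewrite p2 Euclid_dvdX.
Qed.

Lemma ELC_pow2 (F : finFieldType) (n : nat) (U : {set subsp F n}) :
  equidistant_linear_code U -> exists k, #|U| = (2 ^ k)%N.
Proof.
move=> [[U0 [op [hcl [hA [hC [hid [hinv [hK _]]]]]]]] _].
pose T := {X : subsp F n | X \in U}.
pose op' (a b : T) : T := exist _ (op (val a) (val b)) (hcl _ _ (valP a) (valP b)).
pose z : T := exist _ 0%VS U0.
have A : associative op'.
  by move=> a b c; apply: val_inj => /=; apply: hA; exact: valP.
have L : left_id z op'.
  by move=> a; apply: val_inj => /=; exact: (hid _ (valP a)).1.
have K : forall a, op' a a = z.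
  by move=> a; apply: val_inj => /=; exact: hK (valP a).
have [k hk] := card_pow2 A L K.
by exists k; rewrite -hk card_sig; apply: eq_card => X; rewrite inE.
Qed.

Lemma ratio_le (a b : nat) : (0 < b)%N -> (2 * a <= b)%N -> (a%:R / b%:R <= 1 / 2 :> rat).
Proof.
move=> b0 h; rewrite ler_pdivrMr ?ltr0n //.
have : ((2 * a)%:R <= b%:R :> rat) by rewrite ler_nat.
rewrite natrM; lra.
Qed.

Lemma ratio_eq (a b : nat) : (0 < b)%N -> (a%:R / b%:R = 1 / 2 :> rat) -> (2 * a = b)%N.
Proof.
move=> b0 h.
have : (a%:R = 1 / 2 * b%:R :> rat) by rewrite -h divfK // pnatr_eq0 -lt0n.
move=> e; apply/eqP; rewrite -(eqr_nat rat) natrM; apply/eqP; lra.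
Qed.

Theorem lemma10 (F : finFieldType) (n : nat) (hn : (3 <= n)%N) :
  ((Eqn F n)%:R / #|Pqn F n|%:R <= 1 / 2 :> rat) /\
  ((Eqn F n)%:R / #|Pqn F n|%:R = 1 / 2 :> rat ->
     n = 3%N /\ (#|F| = 2%N \/ #|F| = 5%N)).
Proof.
have P5 := Pqn_ge5 F hn.
have P0 : (0 < #|Pqn F n|)%N by lia.
have hE : (2 * Eqn F n <= #|Pqn F n|)%N.
  have : (Eqn F n <= #|Pqn F n| %/ 2)%N.
    apply/bigmax_leqP => U /asboolP hU; rewrite leq_divRL //.
    by have [h _] := geo hn hU; rewrite mulnC.
  have := leq_trunc_div #|Pqn F n| 2; lia.
split; first exact: ratio_le.
move=> /(ratio_eq P0) E2.
pose A := [pred U : {set subsp F n} | `[< equidistant_linear_code U >]].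
have Apos : (0 < #|A|)%N.
  rewrite lt0n; apply/negP => /eqP A0.
  have : Eqn F n = 0%N.
    rewrite /Eqn big_pred0 // => U; have := card0_eq A0 U; by rewrite !inE.
  lia.
have [U UA UE] := @eq_bigmax_cond _ A (fun U => #|U|) Apos.
have EU : Eqn F n = #|U| by exact: UE.
move: UA; rewrite inE => /asboolP hU.
have [_ h] := geo hn hU.
have [n3 cU] := h ltac:(lia).
split => //.
have [k hk] := ELC_pow2 hU.
have e : (#|F| * #|F| + #|F| + 2 = 2 ^ k)%N by rewrite -hk cU mulnn.
have q2 := @q_ge2 F.
have := @card_not90 F.
have RN := RN.RN_Z (Z.of_nat #|F|) k (Zle_0_nat _) ltac:(lia).
case: RN => [|[|[|[|]]]]; lia.
Qed.
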